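(* Let $Z$ be a regular Hausdorff topological space such that there is an increasing sequence $A_n$, $n\in\mathbb{N}$, of closed subspaces of $Z$, each of which is a separable metric space (under a suitable metric compatible with its relative topology), with $Z=\bigcup_{n\in\mathbb{N}} A_n$. Then there is a countable collection of continuous real-valued functions on $Z$ which separates the points of $Z$. *)

(* Defs.v *)
From HB Require Import structures.
From mathcomp Require Import all_boot all_order all_algebra.
From mathcomp Require Import all_classical all_reals all_analysis.
Set Implicit Arguments. Unset Strict Implicit. Unset Printing Implicit Defensive.
Import Order.TTheory GRing.Theory Num.Theory numFieldNormedType.Exports.
Local Open Scope classical_set_scope.
Local Open Scope ring_scope.

Definition metric_on {T : Type} {R : realType} (A : set T) (d : T -> T -> R) : Prop :=
  (forall x y, A x -> A y -> 0 <= d x y) /\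
  (forall x y, A x -> A y -> (d x y = 0 <-> x = y)) /\
  (forall x y, A x -> A y -> d x y = d y x) /\
  (forall x y z, A x -> A y -> A z -> d x z <= d x y + d y z).

(* The metric [d] on [A] induces the relative (subspace) topology of [A]:
   at every point x of A, the relative neighbourhoods of x in A are exactly the
   sets containing the trace on A of some open d-ball around x. *)
Definition metric_compatible_on {T : topologicalType} {R : realType}
  (A : set T) (d : T -> T -> R) : Prop :=
  forall x, A x -> forall U : set T,
    (exists2 V, nbhs x V & V `&` A `<=` U) <->
    (exists2 e : R, 0 < e & forall y, A y -> d x y < e -> U y).

Definition separable_metric_subspace {T : topologicalType} (R : realType)
  (A : set T) : Prop :=
  (exists d : T -> T -> R, metric_on A d /\ metric_compatible_on A d) /\
  (exists D : set T, countable D /\ D `<=` A /\ A `<=` closure D).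

(* Main.v *)
Require Import Defs.
From HB Require Import structures.
From mathcomp Require Import all_boot all_order all_algebra.
From mathcomp Require Import all_classical all_reals all_analysis.
From mathcomp Require Import lra.
Import Order.TTheory GRing.Theory Num.Theory numFieldNormedType.Exports.
Local Open Scope classical_set_scope.
Local Open Scope ring_scope.

Lemma exists_inv (R : realType) (e : R) : 0 < e -> exists k : nat, k.+1%:R^-1 < e.
Proof.
move=> e0; have [N _ HN] := near_infty_natSinv_lt (PosNum e0).
by exists N; apply: (HN N); rewrite /= leqnn.
Qed.

Lemma network_cover (Z : topologicalType) (N : nat -> set Z) :
  regular_space Z ->
  (forall x W, open W -> W x -> exists k, N k x /\ N k `<=` W) ->
  forall X Y : set Z, closed Y -> X `&` Y = set0 ->
  exists U : nat -> set Z, (forall k, open (U k)) /\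
    (forall k, closure (U k) `&` Y = set0) /\ X `<=` \bigcup_k U k.
Proof.
move=> reg hN X Y cY XY.
have h k : exists U : set Z, [/\ open U, closure U `&` Y = set0 &
   ((exists U', [/\ open U', closure U' `&` Y = set0 & N k `<=` U']) ->
     N k `<=` U)].
  case: (pselect (exists U', [/\ open U', closure U' `&` Y = set0 & N k `<=` U'])).
    by move=> [U' [oU' cU' NU']]; exists U'; split.
  move=> nE; exists set0; split; first exact: open0.
    by rewrite closure0 set0I.
  by move=> /nE.
have [U hU] := choice h.
exists U; split; first by move=> k; case: (hU k).
split; first by move=> k; case: (hU k).
move=> x Xx.
have nYx : ~ Y x by move=> Yx; have : (X `&` Y) x by []; rewrite XY.
have [U0 [V [oU0 oV U0x YV U0V]]] := (regular_openP x).1 (reg x) Y cY nYx.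
have [k [Nkx NkU]] := hN x U0 oU0 U0x.
have U0cV : U0 `<=` ~` V by move=> w U0w Vw; have : (U0 `&` V) w by []; rewrite U0V.
have clU0 : closure U0 `<=` ~` V.
  apply: subset_trans (closureS U0cV) _; exact: (open_closedC oV).
have cl : closure U0 `&` Y = set0.
  by rewrite -subset0 => z [/clU0 nVz /YV Vz].
case: (hU k) => _ _ H.
exists k => //; apply: H; last exact: Nkx.
by exists U0; split.
Qed.

Lemma network_normal (Z : topologicalType) (N : nat -> set Z) :
  regular_space Z ->
  (forall x W, open W -> W x -> exists k, N k x /\ N k `<=` W) ->
  forall C D : set Z, closed C -> closed D -> C `&` D = set0 ->
  exists U V, [/\ open U, open V, C `<=` U, D `<=` V & U `&` V = set0].
Proof.
move=> reg hN C D cC cD CD.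
have [U [oU [cU CU]]] := network_cover _ _ reg hN _ _ cD CD.
have DC : D `&` C = set0 by rewrite setIC.
have [V [oV [cV DV]]] := network_cover _ _ reg hN _ _ cC DC.
pose Ub n := \bigcup_(i in `I_n.+1) closure (U i).
pose Vb n := \bigcup_(i in `I_n.+1) closure (V i).
have cUb n : closed (Ub n).
  by apply: closed_bigcup => // i _; exact: closed_closure.
have cVb n : closed (Vb n).
  by apply: closed_bigcup => // i _; exact: closed_closure.
exists (\bigcup_n (U n `&` ~` Vb n)), (\bigcup_n (V n `&` ~` Ub n)); split.
- apply: bigcup_open => n _; apply: openI => //; exact: closed_openC.
- apply: bigcup_open => n _; apply: openI => //; exact: closed_openC.
- move=> x Cx; have [n _ Unx] := CU x Cx; exists n => //; split => //.
  move=> [i _ clVi].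
  by have : (closure (V i) `&` C) x by []; rewrite cV.
- move=> x Dx; have [n _ Vnx] := DV x Dx; exists n => //; split => //.
  move=> [i _ clUi].
  by have : (closure (U i) `&` D) x by []; rewrite cU.
- rewrite -subset0 => x [[n _ [Unx nVbn]] [m _ [Vmx nUbm]]].
  case: (leqP n m) => nm.
  + apply: nUbm; exists n; last exact: subset_closure.
    by rewrite /= ltnS.
  + apply: nVbn; exists m; last exact: subset_closure.
    by rewrite /= ltnS; exact: ltnW.
Qed.

Lemma rel_closed (Z : topologicalType) (R : realType) (A C : set Z)
  (d : Z -> Z -> R) :
  closed A -> metric_compatible_on A d -> C `<=` A ->
  (forall z, A z -> ~ C z -> exists2 e : R, 0 < e &
     forall w, A w -> d z w < e -> ~ C w) -> closed C.
Proof.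
move=> cA comp CA h z clz.
have Az : A z by apply: cA; exact: (closureS CA).
apply: contrapT => nCz.
have [e e0 he] := h z Az nCz.
have [V Vz VA] := (comp z Az (~` C)).2 (ex_intro2 _ _ e e0 he).
have [w [Cw Vw]] := clz V Vz.
exact: (VA w (conj Vw (CA w Cw)) Cw).
Qed.

Theorem lemma2p2 (R : realType) (Z : topologicalType) (A : nat -> set Z) :
  regular_space Z -> hausdorff_space Z ->
  (forall n, closed (A n)) ->
  (forall n, A n `<=` A n.+1) ->
  (forall n, separable_metric_subspace R (A n)) ->
  \bigcup_n A n = setT ->
  exists F : set (Z -> R),
    countable F /\ (forall f, F f -> continuous f) /\
    (forall x y : Z, x <> y -> exists2 f, F f & f x <> f y).
Proof.
move=> reg hs hcl hmono hsep hcov.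
have hsep' n : exists dD : (Z -> Z -> R) * set Z,
    [/\ metric_on (A n) dD.1, metric_compatible_on (A n) dD.1, countable dD.2,
        dD.2 `<=` A n & A n `<=` closure dD.2].
  by case: (hsep n) => [[d [m c]] [D [cD [DA AD]]]]; exists (d, D).
have [dD hdD] := choice hsep'.
pose d n := (dD n).1.
pose D n := (dD n).2.
have md n : metric_on (A n) (d n) by case: (hdD n).
have comp n : metric_compatible_on (A n) (d n) by case: (hdD n).
have cD n : countable (D n) by case: (hdD n).
have DA n : D n `<=` A n by case: (hdD n).
have AD n : A n `<=` closure (D n) by case: (hdD n).
have close n x : A n x -> forall e, 0 < e -> exists q, D n q /\ d n x q < e.
  move=> Anx e e0.
  have [V Vx VA] := (comp n x Anx [set y | d n x y < e]).2
    (ex_intro2 _ _ e e0 (fun y _ h => h)).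
  have [q [Dq Vq]] := AD n x Anx V Vx.
  by exists q; split => //; apply: VA; split => //; exact: DA.
have mono m n : (m <= n)%N -> A m `<=` A n.
  elim: n => [|n IH]; first by rewrite leqn0 => /eqP->.
  rewrite leq_eqVlt => /orP[/eqP->//|]; rewrite ltnS => /IH.
  by move=> h; apply: subset_trans h _; exact: hmono.
have inA x : exists n, A n x.
  have : (\bigcup_n A n) x by rewrite hcov.
  by case=> n _ Anx; exists n.
pose Net (j : nat * (Z * nat)) :=
  [set y | A j.1 y /\ d j.1 j.2.1 y < j.2.2.+1%:R^-1].
pose S := [set j : nat * (Z * nat) | D j.1 j.2.1].
have cS : countable S.
  apply: (@sub_countable _ _ _ ([set: nat] `*` ((\bigcup_n D n) `*` [set: nat]))).
    apply: subset_card_le => -[n [q k]] /= Dq; split => //; split => //.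
    by exists n.
  apply: countableX => //; apply: countableX => //.
  by apply: bigcup_countable => //.
have /countable_injP [g ginj] := cS.
pose N k := [set x | exists2 j, S j & g j = k /\ Net j x].
have hN x W : open W -> W x -> exists k, N k x /\ N k `<=` W.
  move=> oW Wx; have [n Anx] := inA x.
  have hW : exists2 V, nbhs x V & V `&` A n `<=` W.
    by exists W; [exact: open_nbhs_nbhs | move=> y []].
  have [e e0 he] := (comp n x Anx W).1 hW.
  have [k hk] := exists_inv _ (e / 2) (divr_gt0 e0 (ltr0Sn _ 1)).
  have u0 : (0 : R) < k.+1%:R^-1 by rewrite invr_gt0 ltr0Sn.
  have [q [Dq dxq]] := close n x Anx _ u0.
  have [mnn [mz [msym mtri]]] := md n.
  have Aq := DA n q Dq.
  exists (g (n, (q, k))); split.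
    exists (n, (q, k)) => //; split => //; split => //=.
    by rewrite msym.
  move=> y [j' Sj' [gj' [Ay dy]]].
  have ej : j' = (n, (q, k)) by apply: ginj => //; exact: mem_set.
  subst j'; move: Ay dy => /= Ay dy.
  apply: he => //.
  have := mtri x q y Anx Aq Ay.
  move=> tri; move: tri dy dxq hk; move: (d n x y) (d n x q) (d n q y) (k.+1%:R^-1 : R) => a b c v; lra.
have nZ : normal_space Z.
  by apply/(@normal_openP R Z); exact: network_normal _ _ reg hN.
pose u (j : nat * (Z * nat)) : R := j.2.2.+1%:R^-1.
pose Cj (j : nat * (Z * nat)) :=
  [set z | [/\ A j.1 z, A j.1 j.2.1 & d j.1 j.2.1 z <= u j]].
pose Dj (j : nat * (Z * nat)) :=
  [set z | [/\ A j.1 z, A j.1 j.2.1 & 2 * u j <= d j.1 j.2.1 z]].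
have hf j : exists f : Z -> R, [/\ continuous f, (forall z, Cj j z -> f z = 0)
   & (forall z, Dj j z -> f z = 1)].
  case: j => n [q k].
  have u0 : 0 < u (n, (q, k)) by rewrite /u invr_gt0 ltr0Sn.
  have [mnn [mz [msym mtri]]] := md n.
  have cC : closed (Cj (n, (q, k))).
    apply: (rel_closed _ _ _ _ _ (hcl n) (comp n)); first by move=> z [].
    move=> z Az nC.
    have [Aq|nAq] := pselect (A n q); last first.
      by exists 1 => // w _ _ [].
    have lt : u (n, (q, k)) < d n q z.
      by rewrite ltNge; apply/negP => h; apply: nC.
    exists (d n q z - u (n, (q, k))); first by rewrite subr_gt0.
    move=> w Aw dzw [_ _ dqw].
    have := mtri q w z Aq Aw Az; rewrite (msym w z Aw Az).
    move: dzw dqw lt; move: (d n z w) (d n q w) (d n q z) (u (n, (q, k))).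
    move=> a b c v; lra.
  have cDD : closed (Dj (n, (q, k))).
    apply: (rel_closed _ _ _ _ _ (hcl n) (comp n)); first by move=> z [].
    move=> z Az nC.
    have [Aq|nAq] := pselect (A n q); last first.
      by exists 1 => // w _ _ [].
    have lt : d n q z < 2 * u (n, (q, k)).
      by rewrite ltNge; apply/negP => h; apply: nC.
    exists (2 * u (n, (q, k)) - d n q z); first by rewrite subr_gt0.
    move=> w Aw dzw [_ _ dqw].
    have := mtri q z w Aq Az Aw.
    move: dzw dqw lt; move: (d n z w) (d n q w) (d n q z) (u (n, (q, k))).
    move=> a b c v; lra.
  have CD0 : Cj (n, (q, k)) `&` Dj (n, (q, k)) = set0.
    rewrite -subset0 => z [[_ _ h1] [_ _ h2]].
    move: h1 h2 u0; move: (d _ _ z) (u (n, (q, k))) => a v; lra.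
  have := (@normal_separatorP R Z).1 nZ _ _ cC cDD CD0.
  move=> /(@uniform_separatorP Z R) [f [cf _ f0 f1]].
  exists f; split => // z hz; [apply: f0 | apply: f1]; by exists z.
have [phi hphi] := choice hf.
exists (phi @` S); split.
  exact: (sub_countable (card_image_le phi S) cS).
split.
  by move=> f [j _ <-]; case: (hphi j).
move=> x y nxy.
have [a Aax] := inA x; have [b Aby] := inA y.
pose n := maxn a b.
have Anx : A n x := mono a n (leq_maxl a b) x Aax.
have Any : A n y := mono b n (leq_maxr a b) y Aby.
have [mnn [mz [msym mtri]]] := md n.
have dpos : 0 < d n x y.
  rewrite lt_neqAle mnn // andbT eq_sym; apply/eqP => /(mz x y Anx Any).
  exact: nxy.
have [k hk] := exists_inv _ (d n x y / 3) (divr_gt0 dpos (ltr0Sn _ 2)).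
have u0 : (0 : R) < k.+1%:R^-1 by rewrite invr_gt0 ltr0Sn.
have [q [Dq dxq]] := close n x Anx _ u0.
have Aq := DA n q Dq.
exists (phi (n, (q, k))); first by exists (n, (q, k)).
case: (hphi (n, (q, k))) => _ h0 h1.
rewrite h0; last first.
  split => //; rewrite /u /= (msym q x Aq Anx); exact: ltW.
rewrite h1; last first.
  split => //; rewrite /u /=.
  have := mtri x q y Anx Aq Any; rewrite (msym x q Anx Aq) in dxq *.
  move: dxq hk; move: (d n x y) (d n q x) (d n q y) (k.+1%:R^-1 : R).
  move=> a' b' c' v; lra.
by move=> /esym/eqP; rewrite oner_eq0.
Qed.
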